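(* Let $R$ be a ring of finite characteristic and $J$ a nil ideal of $R$ of bounded index. Then the following are equivalent: (1) $R$ is an $n$-torsion clean ring for some $n\in\mathbb{N}$; (2) $R/J$ is a $t$-torsion clean ring for some $t\in\mathbb{N}$.
   Context: All rings are associative with identity. An ideal $I$ is nil of bounded index if there is $k$ with $r^k=0$ for all $r\in I$. A ring $R$ is $n$-torsion clean if every $r\in R$ can be written $r=e+u$ with $e^2=e$, $u$ a unit, $u^n=1$, and $n$ is the smallest natural number with this property. *)

(* Defs.v *)
From HB Require Import structures.
From mathcomp Require Import all_boot all_algebra generic_quotient.
Set Implicit Arguments. Unset Strict Implicit. Unset Printing Implicit Defensive.
Import GRing.Theory.
Local Open Scope ring_scope.
Local Open Scope quotient_scope.

Record tsIdeal (R : pzRingType) := TSIdeal {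
  tsI :> zmodClosed R;
  tsI_mull : forall a x, x \in tsI -> a * x \in tsI;
  tsI_mulr : forall a x, x \in tsI -> x * a \in tsI }.

Section TwoSidedQuotient.
Variables (R : pzRingType) (J : tsIdeal R).

Definition rq_equiv (x y : R) := (x - y) \in tsI J.

Lemma rq_equiv_is_equiv : equiv_class_of rq_equiv.
Proof.
split=> [x|x y|y x z]; rewrite /rq_equiv ?subrr ?rpred0 //.
  by apply/idP/idP => h; rewrite -opprB rpredN.
by move=> *; rewrite -[x](addrNK y) -addrA rpredD.
Qed.

Canonical rq_equiv_equiv := EquivRelPack rq_equiv_is_equiv.
Canonical rq_equiv_encModRel := defaultEncModRel rq_equiv.

Definition rquot := {eq_quot rq_equiv}.
HB.instance Definition _ : EqQuotient R rq_equiv rquot := EqQuotient.on rquot.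
HB.instance Definition _ := Choice.on rquot.

Lemma rq_equivE (x y : R) : (x == y %[mod rquot]) = (x - y \in tsI J).
Proof. by rewrite piE. Qed.

Definition rq_zero : rquot := lift_cst rquot 0.
Definition rq_add := lift_op2 rquot +%R.
Definition rq_opp := lift_op1 rquot -%R.
Canonical rq_pi_zero_morph := PiConst rq_zero.

Lemma rq_pi_opp : {morph \pi_rquot : x / - x >-> rq_opp x}.
Proof.
move=> x; unlock rq_opp; apply/eqP; rewrite rq_equivE.
have h : x - repr (\pi_rquot x) \in tsI J by rewrite -rq_equivE reprK.
by rewrite -opprD rpredN.
Qed.
Canonical rq_pi_opp_morph := PiMorph1 rq_pi_opp.

Lemma rq_pi_add : {morph \pi_rquot : x y / x + y >-> rq_add x y}.
Proof.
move=> x y; unlock rq_add; apply/eqP; rewrite rq_equivE.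
have hx : x - repr (\pi_rquot x) \in tsI J by rewrite -rq_equivE reprK.
have hy : y - repr (\pi_rquot y) \in tsI J by rewrite -rq_equivE reprK.
by rewrite opprD addrACA rpredD.
Qed.
Canonical rq_pi_add_morph := PiMorph2 rq_pi_add.

Lemma rq_addA : associative rq_add.
Proof. by move=> x y z; rewrite -[x]reprK -[y]reprK -[z]reprK !piE addrA. Qed.
Lemma rq_addC : commutative rq_add.
Proof. by move=> x y; rewrite -[x]reprK -[y]reprK !piE addrC. Qed.
Lemma rq_add0 : left_id rq_zero rq_add.
Proof. by move=> x; rewrite -[x]reprK !piE add0r. Qed.
Lemma rq_addN : left_inverse rq_zero rq_opp rq_add.
Proof. by move=> x; rewrite -[x]reprK !piE addNr. Qed.

HB.instance Definition _ := GRing.isZmodule.Build rquot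
  rq_addA rq_addC rq_add0 rq_addN.

Definition rq_one : rquot := lift_cst rquot 1.
Definition rq_mul := lift_op2 rquot *%R.
Canonical rq_pi_one_morph := PiConst rq_one.

Lemma rq_pi_mul : {morph \pi_rquot : x y / x * y >-> rq_mul x y}.
Proof.
move=> x y; unlock rq_mul; apply/eqP; rewrite rq_equivE.
set x' := repr (\pi_rquot x); set y' := repr (\pi_rquot y).
have hx : x - x' \in tsI J by rewrite -rq_equivE /x' reprK.
have hy : y - y' \in tsI J by rewrite -rq_equivE /y' reprK.
have -> : x * y - x' * y' = (x - x') * y + x' * (y - y').
  by rewrite mulrBl mulrBr addrA addrNK.
by apply: rpredD; [apply: tsI_mulr | apply: tsI_mull].
Qed.
Canonical rq_pi_mul_morph := PiMorph2 rq_pi_mul.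

Lemma rq_mulA : associative rq_mul.
Proof. by move=> x y z; rewrite -[x]reprK -[y]reprK -[z]reprK !piE mulrA. Qed.
Lemma rq_mul1 : left_id rq_one rq_mul.
Proof. by move=> x; rewrite -[x]reprK !piE mul1r. Qed.
Lemma rq_mulr1 : right_id rq_one rq_mul.
Proof. by move=> x; rewrite -[x]reprK !piE mulr1. Qed.
Lemma rq_mulDl : left_distributive rq_mul +%R.
Proof.
move=> x y z; rewrite -[x]reprK -[y]reprK -[z]reprK.
by apply/eqP; rewrite piE /= mulrDl equiv_refl.
Qed.
Lemma rq_mulDr : right_distributive rq_mul +%R.
Proof.
move=> x y z; rewrite -[x]reprK -[y]reprK -[z]reprK.
by apply/eqP; rewrite piE /= mulrDr equiv_refl.
Qed.

HB.instance Definition _ := GRing.Zmodule_isPzRing.Build rquot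
  rq_mulA rq_mul1 rq_mulr1 rq_mulDl rq_mulDr.

Lemma rquot_piM (x y : R) : \pi_rquot (x * y) = \pi_rquot x * \pi_rquot y.
Proof. exact: rq_pi_mul. Qed.
End TwoSidedQuotient.

Definition is_unit (R : pzRingType) (u : R) : Prop :=
  exists v : R, u * v = 1 /\ v * u = 1.

Definition torsion_clean_with (R : pzRingType) (n : nat) : Prop :=
  forall r : R, exists e u : R,
    e * e = e /\ is_unit u /\ u ^+ n = 1 /\ r = e + u.

Definition n_torsion_clean (R : pzRingType) (n : nat) : Prop :=
  (0 < n)%N /\ torsion_clean_with R n /\
  forall m : nat, (0 < m)%N -> torsion_clean_with R m -> (n <= m)%N.

Definition finite_char (R : pzRingType) : Prop :=
  exists m : nat, (0 < m)%N /\ (m%:R : R) = 0.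

Definition nil_bounded_index (R : pzRingType) (J : tsIdeal R) : Prop :=
  exists k : nat, forall r : R, r \in tsI J -> r ^+ k = 0.

(* Main.v *)
Require Import Defs.
From HB Require Import structures.
From mathcomp Require Import all_boot all_algebra generic_quotient.
From mathcomp Require Import ring.
From Stdlib Require Import Classical.
Set Implicit Arguments. Unset Strict Implicit. Unset Printing Implicit Defensive.
Import GRing.Theory.
Local Open Scope ring_scope.
Local Open Scope quotient_scope.
Section S.
Variable R : pzRingType.
Variable J : tsIdeal R.
Local Notation pi := (\pi_(rquot J) : R -> rquot J).
Lemma pi1 : pi 1 = 1. Proof. rewrite -[RHS]reprK -[in RHS](mul1r (repr _)) rquot_piM reprK mulr1. done. Qed.
Lemma piD x y : pi (x + y) = pi x + pi y. Proof. exact: rq_pi_add. Qed.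
Lemma piN x : pi (- x) = - pi x. Proof. exact: rq_pi_opp. Qed.
Lemma pi0 : pi 0 = 0.
Proof. have h : pi 0 = pi 0 + pi 0 by rewrite -piD addr0.
apply: (@addrI _ (pi 0)). by rewrite addr0 -h. Qed.
Lemma piB x y : pi (x - y) = pi x - pi y. Proof. by rewrite piD piN. Qed.
Lemma piX x n : pi (x ^+ n) = (pi x) ^+ n.
Proof. elim: n => [|n IH]; first by rewrite !expr0 pi1. by rewrite !exprS rquot_piM IH. Qed.
Lemma pi_eq0 x : pi x = 0 -> x \in tsI J.
Proof. move=> h; have := rq_equivE J x 0. by rewrite h pi0 eqxx subr0 => <-. Qed.
Lemma pi_eq x y : pi x = pi y -> x - y \in tsI J.
Proof. by move=> h; apply: pi_eq0; rewrite piB h subrr. Qed.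
Lemma pi_J0 x : x \in tsI J -> pi x = 0.
Proof. move=> h; rewrite -(pi0); apply/eqP; rewrite rq_equivE subr0; exact: h. Qed.
End S.

Section NZ.
Variables (R0 : pzRingType) (h10 : (1:R0) != 0).
Definition R' : Type := R0.
HB.instance Definition _ := GRing.PzRing.on R'.
HB.instance Definition _ := GRing.PzSemiRing_isNonZero.Build R' h10.
Let R := R'.
Lemma lift_idem' (a : R) K : (a * a - a) ^+ K = 0 ->
  exists e c : R, e * e = e /\ e - a = c * (a * a - a).
Proof.
move=> hK.
pose cfu : commr_rmorph (intr : {rmorphism int -> R}) a := fun x => commr_int a x.
pose h := horner_morph cfu.
pose D : {poly int} := 'X * 'X - 'X.
pose q := fix q (s : nat) : {poly int} := if s is s'.+1 then 3 * q s' ^+ 2 - 2 * q s' ^+ 3 else 'X.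
have inv : forall s, (exists c, q s * q s - q s = c * D ^+ (2 ^ s)) /\ exists d, q s - 'X = d * D.
  elim=> [|s [[c hc] [d hd]]].
    split; [exists 1; by rewrite mul1r expr1 | exists 0; by rewrite mul0r subrr].
  have hY : D ^+ (2 ^ s) = D ^+ (2 ^ s).-1 * D by rewrite -exprSr prednK // expn_gt0.
  split.
    exists (c * c * (4 * c * D ^+ (2 ^ s) - 3)).
    rewrite expnSr exprM expr2 /=.
    have -> : (3 * q s ^+ 2 - 2 * q s ^+ 3) * (3 * q s ^+ 2 - 2 * q s ^+ 3) - (3 * q s ^+ 2 - 2 * q s ^+ 3)
       = (q s * q s - q s) * (q s * q s - q s) * (4 * (q s * q s - q s) - 3) by ring.
    rewrite hc; ring.
  exists (d - (2 * q s - 1) * c * D ^+ (2 ^ s).-1) => /=.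
  have -> : 3 * q s ^+ 2 - 2 * q s ^+ 3 - 'X = (q s - 'X) - (2 * q s - 1) * (q s * q s - q s) by ring.
  by rewrite hd hc hY; ring.
have [[c hc] [d hd]] := inv K.
have hD : h D = a * a - a by rewrite /h /D rmorphB rmorphM /= horner_morphX.
exists (h (q K)), (h d); split.
  apply/eqP; rewrite -subr_eq0 /h -rmorphM -rmorphB hc rmorphM rmorphXn /= -/h hD.
  have -> : (2 ^ K = (2 ^ K - K) + K)%N by rewrite subnK // ltnW // ltn_expl.
  by rewrite exprD hK mulr0 mulr0.
by rewrite -hD /h -rmorphM -hd rmorphB /= horner_morphX.
Qed.
End NZ.

Lemma lift_idem (R : pzRingType) (a : R) K : (a * a - a) ^+ K = 0 ->
  exists e c : R, e * e = e /\ e - a = c * (a * a - a).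
Proof.
case: (eqVneq (1 : R) 0) => [h10|h10]; last exact: (@lift_idem' R h10).
have z : forall x : R, x = 0 by move=> x; rewrite -[x]mulr1 h10 mulr0.
by move=> _; exists 0, 0; rewrite (z a) !mulr0 subrr.
Qed.

Lemma unipotent (R : pzRingType) (j : R) m K : (m%:R : R) = 0 -> j ^+ K = 0 ->
  (j + 1) ^+ (m * K`!) = 1.
Proof.
move=> hm hK; rewrite exprD1n big_ord_recl /= expr0 bin0 mulr1n.
rewrite big1 ?addr0 // => [[i hi]] _ /=; rewrite /bump /= add1n.
case: (leqP K i.+1) => hiK.
  by rewrite -(subnK hiK) exprD hK mulr0 mul0rn.
have hd : (i.+1 %| K`!)%N by apply: dvdn_fact; rewrite ltn0Sn ltnW.
have [f hf] := dvdnP hd.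
have hb := mul_bin_diag (m * K`!) i.
have -> : 'C(m * K`!, i.+1) = (m * (f * 'C((m * K`!).-1, i)))%N.
  apply/eqP; rewrite -(eqn_pmul2l (ltn0Sn i)) -hb hf; apply/eqP.
  by rewrite !mulnA; congr (_ * _)%N; rewrite mulnC mulnA.
by rewrite mulrnA -[_ *+ m]mulr_natr hm mulr0 mul0rn.
Qed.

Lemma min_ex (P : nat -> Prop) : (exists m, (0 < m)%N /\ P m) ->
  exists n, (0 < n)%N /\ P n /\ forall k, (0 < k)%N -> P k -> (n <= k)%N.
Proof.
case=> m; elim/ltn_ind: m => m IH [m0 Pm].
case: (classic (exists k, ((0 < k)%N /\ P k) /\ (k < m)%N)) => [[k [Hk km]]|H].
  exact: IH k km Hk.
exists m; split=> //; split=> // k k0 Pk; rewrite leqNgt; apply/negP => km.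
by apply: H; exists k.
Qed.

Theorem corollary2p12 (R : pzRingType) (J : tsIdeal R) :
  finite_char R -> nil_bounded_index J ->
  ((exists n : nat, n_torsion_clean R n) <->
   (exists t : nat, n_torsion_clean (rquot J) t)).
Proof.
move=> [m [m0 hm]] [K hK]; split.
- case=> n [n0 [tcn _]]; apply: min_ex; exists n; split=> // r.
  have [e [u [he [[v [uv vu]] [un re]]]]] := tcn (repr r).
  exists (\pi_(rquot J) e), (\pi_(rquot J) u).
  split; first by rewrite -rquot_piM he.
  split; first by exists (\pi_(rquot J) v); rewrite -!rquot_piM uv vu pi1.
  split; first by rewrite -piX un pi1.
  by rewrite -piD -re reprK.
- case=> t [t0 [tct _]]; apply: min_ex.
  have Np : (0 < t * (m * K`!))%N by rewrite !muln_gt0 t0 m0 fact_gt0.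
  exists (t * (m * K`!))%N; split=> // r.
  have [E [U [hE [_ [hU hr]]]]] := tct (\pi_(rquot J) r).
  pose a := repr E.
  have pa : \pi_(rquot J) a = E by rewrite /a reprK.
  have aJ : a * a - a \in tsI J by apply: pi_eq0; rewrite piB rquot_piM pa hE subrr.
  have [e [c [he hec]]] := lift_idem (hK _ aJ : (a * a - a) ^+ K = 0).
  have pe : \pi_(rquot J) e = E.
    have : e - a \in tsI J by rewrite hec; apply: tsI_mull.
    by move/pi_J0; rewrite piB pa => /eqP; rewrite subr_eq0 => /eqP.
  pose u := r - e.
  have pu : \pi_(rquot J) u = U by rewrite /u piB pe hr (addrC E U) addrK.
  have jJ : u ^+ t - 1 \in tsI J by apply: pi_eq0; rewrite piB piX pu hU pi1 subrr.
  have hN : u ^+ (t * (m * K`!)) = 1.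
    by rewrite exprM -(subrK 1 (u ^+ t)) unipotent // hK.
  exists e, u; split=> //; split.
    exists (u ^+ (t * (m * K`!)).-1); split.
      by rewrite -exprS prednK.
    by rewrite -exprSr prednK.
  by split=> //; rewrite /u addrC subrK.
Qed.
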